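(* Let $n\ge1$ and define $\check{\mathbf{H}}_c,\check{\mathbf{H}}_s\in\mathbb{R}^{n\times n}$ by $(\check{\mathbf{H}}_c)_{j,k}=\frac{1}{\sqrt n}\cos\frac{2jk\pi}{n}$, $(\check{\mathbf{H}}_s)_{j,k}=\frac{1}{\sqrt n}\sin\frac{2jk\pi}{n}$ for $j,k=0,\dots,n-1$, $\check{\mathbf{H}}^{\pm}:=\check{\mathbf{H}}_c\pm\check{\mathbf{H}}_s$, and $\check{\mathbf{F}}:=\check{\mathbf{H}}_c+i\check{\mathbf{H}}_s\in\mathbb{C}^{n\times n}$. Let $\mathbf{A}=\operatorname{Circ}(\mathbf{a})\in\mathbb{R}^{n\times n}$ be a symmetric circulant matrix with first column $\mathbf{a}=(a_k)_{k=0}^{n-1}$, $a_{n-i}=a_i$ for $i=1,\dots,n-1$, and let $\boldsymbol{\Lambda}:=\sqrt n\,\operatorname{Diag}(\check{\mathbf{H}}_c\mathbf{a})$. Then $\check{\mathbf{H}}^+\mathbf{A}\check{\mathbf{H}}^-=\check{\mathbf{H}}^-\mathbf{A}\check{\mathbf{H}}^+=\boldsymbol{\Lambda}\check{\mathbf{F}}^2=\check{\mathbf{F}}^2\boldsymbol{\Lambda}$.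
   Context: $\operatorname{Circ}(\mathbf{a})$ is the circulant matrix with first column $\mathbf{a}$, i.e. $(\mathbf{A})_{j,k}=a_{(j-k)\bmod n}$. $\operatorname{Diag}(\mathbf{v})$ is the diagonal matrix with diagonal $\mathbf{v}$. *)

(* Defs.v *)
From HB Require Import structures.
From mathcomp Require Import all_boot all_order all_algebra.
From mathcomp Require Import reals trigo.
From mathcomp Require Import complex.
Set Implicit Arguments. Unset Strict Implicit. Unset Printing Implicit Defensive.
Import Order.TTheory GRing.Theory Num.Theory.
Local Open Scope ring_scope.

Lemma ord_pos n (i : 'I_n) : (0 < n)%N.
Proof. by case: i => m /=; case: n. Qed.

Definition subord n (j k : 'I_n) : 'I_n :=
  Ordinal (ltn_pmod (j + n - k)%N (ord_pos j)).

Definition Circ (R : Type) n (a : 'cV[R]_n) : 'M[R]_n :=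
  \matrix_(j, k) a (subord j k) 0.

Section Defs.
Variable R : realType.
Variable n : nat.

Definition Hc : 'M[R]_n :=
  \matrix_(j, k) ((Num.sqrt (n%:R))^-1 *
                  cos (2 * (j : nat)%:R * (k : nat)%:R * pi / n%:R)).
Definition Hs : 'M[R]_n :=
  \matrix_(j, k) ((Num.sqrt (n%:R))^-1 *
                  sin (2 * (j : nat)%:R * (k : nat)%:R * pi / n%:R)).
Definition Hp : 'M[R]_n := Hc + Hs.
Definition Hm : 'M[R]_n := Hc - Hs.

Definition toC (x : R) : R[i] := Complex x 0.
Definition iC : R[i] := Complex 0 1.

Definition Fmx : 'M[R[i]]_n := map_mx toC Hc + iC *: map_mx toC Hs.

Definition Lambda (a : 'cV[R]_n) : 'M[R]_n :=
  Num.sqrt (n%:R) *: diag_mx (Hc *m a)^T.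
End Defs.

(* Main.v *)
Require Import Defs.
From HB Require Import structures.
From mathcomp Require Import all_boot all_order all_algebra.
From mathcomp Require Import reals trigo.
From mathcomp Require Import complex.
From mathcomp Require Import ring lra zify.
Set Implicit Arguments. Unset Strict Implicit. Unset Printing Implicit Defensive.
Import Order.TTheory GRing.Theory Num.Theory.
Local Open Scope ring_scope.

Section Trig.
Variable R : realType.
Variable n : nat.
Hypothesis hn : (0 < n)%N.

Let w : R := 2 * pi / n%:R.

Lemma nR0 : (n%:R : R) != 0.
Proof. by rewrite pnatr_eq0 -lt0n. Qed.

Lemma wn : w * n%:R = pi *+ 2.
Proof. rewrite /w mulr2n; field. exact: nR0. Qed.

Lemma cosP (N : nat) (x : R) : cos (x + (pi *+ 2) * N%:R) = cos x.
Proof.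
elim: N => [|N IH]; first by rewrite mulr0 addr0.
by move: IH; rewrite -natr1 mulrDr mulr1 addrA cosD2pi => ->.
Qed.

Lemma sinP (N : nat) (x : R) : sin (x + (pi *+ 2) * N%:R) = sin x.
Proof.
elim: N => [|N IH]; first by rewrite mulr0 addr0.
by move: IH; rewrite -natr1 mulrDr mulr1 addrA sinD2pi => ->.
Qed.

Lemma cos_mod (x : nat) : cos (w * x%:R) = cos (w * (x %% n)%:R).
Proof.
rewrite {1}(divn_eq x n) natrD natrM.
have -> : w * ((x %/ n)%:R * n%:R + (x %% n)%:R) = w * (x %% n)%:R + (pi *+ 2) * (x %/ n)%:R.
  by rewrite -wn; ring.
by rewrite cosP.
Qed.

Lemma sin_mod (x : nat) : sin (w * x%:R) = sin (w * (x %% n)%:R).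
Proof.
rewrite {1}(divn_eq x n) natrD natrM.
have -> : w * ((x %/ n)%:R * n%:R + (x %% n)%:R) = w * (x %% n)%:R + (pi *+ 2) * (x %/ n)%:R.
  by rewrite -wn; ring.
by rewrite sinP.
Qed.

Lemma cos_congr (x y : nat) : (x %% n = y %% n)%N -> cos (w * x%:R) = cos (w * y%:R).
Proof. by move=> H; rewrite cos_mod H -cos_mod. Qed.
Lemma sin_congr (x y : nat) : (x %% n = y %% n)%N -> sin (w * x%:R) = sin (w * y%:R).
Proof. by move=> H; rewrite sin_mod H -sin_mod. Qed.

Lemma wB_eq (x y : nat) : w * (x + (n - 1) * y)%:R = (w * x%:R - w * y%:R) + (pi *+ 2) * y%:R.
Proof.
rewrite -wn natrD natrM natrB //; ring.
Qed.

Lemma cos_wB (x y : nat) : cos (w * x%:R - w * y%:R) = cos (w * (x + (n - 1) * y)%:R).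
Proof. by rewrite wB_eq cosP. Qed.
Lemma sin_wB (x y : nat) : sin (w * x%:R - w * y%:R) = sin (w * (x + (n - 1) * y)%:R).
Proof. by rewrite wB_eq sinP. Qed.

Lemma sums_mod (p : nat) :
  (\sum_(m < n) cos (w * (m * p)%:R) = \sum_(m < n) cos (w * (m * (p %% n))%N%:R)) /\
  (\sum_(m < n) sin (w * (m * p)%:R) = \sum_(m < n) sin (w * (m * (p %% n))%N%:R)).
Proof.
split; apply: eq_bigr => m _.
  by apply: cos_congr; rewrite modnMmr.
by apply: sin_congr; rewrite modnMmr.
Qed.

Lemma sums_small (r : nat) : (0 < r < n)%N ->
  \sum_(m < n) cos (w * (m * r)%:R) = 0 /\ \sum_(m < n) sin (w * (m * r)%:R) = 0.
Proof.
case/andP => r0 rn.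
set th := w * r%:R. set t := th / 2.
have tpos : 0 < sin t.
  apply: sin_gt0_pi; rewrite /t /th /w.
  have n0 : (0 : R) < n%:R by rewrite ltr0n.
  have r0' : (0 : R) < r%:R by rewrite ltr0n.
  have rn' : (r%:R : R) < n%:R by rewrite ltr_nat.
  have -> : 2 * pi / n%:R * r%:R / 2 = (pi : R) * (r%:R / n%:R) by field; exact: nR0.
  apply/andP; split.
    by apply: mulr_gt0; [exact: pi_gt0| exact: divr_gt0].
  rewrite -[X in _ < X]mulr1 ltr_pM2l ?pi_gt0 //.
  by rewrite ltr_pdivrMr // mul1r.
have thE m : w * (m * r)%:R = m%:R * th by rewrite /th natrM; ring.
have nth : n%:R * th = (pi *+ 2) * r%:R by rewrite /th -wn; ring.
have tt : th = t + t by rewrite /t; field.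
have st0 : sin t *+ 2 != 0 by rewrite gt_eqF // pmulrn_lgt0.
split.
  pose g (m : nat) := sin (m%:R * th - t).
  have key : \sum_(m < n) (g m.+1 - g m) = 0.
    rewrite -(big_mkord xpredT (fun k => g k.+1 - g k)) telescope_sumr //.
    rewrite /g nth mul0r sub0r.
    have -> : pi *+ 2 * r%:R - t = - t + pi *+ 2 * r%:R by ring.
    rewrite sinP; lra.
  have e (m : nat) : g m.+1 - g m = cos (w * (m * r)%N%:R) * (sin t *+ 2).
    rewrite /g thE.
    have -> : (m.+1)%:R * th - t = m%:R * th + t by rewrite -natr1 tt; ring.
    rewrite sinD sinB; rewrite mulr2n; ring.
  have : (\sum_(m < n) cos (w * (m * r)%N%:R)) * (sin t *+ 2) = 0.
    by rewrite mulr_suml -[RHS]key; apply: eq_bigr => m _; rewrite e.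
  by move/eqP; rewrite mulf_eq0 (negbTE st0) orbF => /eqP.
pose g (m : nat) := cos (m%:R * th - t).
have key : \sum_(m < n) (g m.+1 - g m) = 0.
  rewrite -(big_mkord xpredT (fun k => g k.+1 - g k)) telescope_sumr //.
  rewrite /g nth mul0r sub0r.
    have -> : pi *+ 2 * r%:R - t = - t + pi *+ 2 * r%:R by ring.
    rewrite cosP; lra.
have e (m : nat) : g m.+1 - g m = - (sin (w * (m * r)%N%:R) * (sin t *+ 2)).
  rewrite /g thE.
  have -> : (m.+1)%:R * th - t = m%:R * th + t by rewrite -natr1 tt; ring.
  rewrite cosD cosB; rewrite mulr2n; ring.
have : (\sum_(m < n) sin (w * (m * r)%N%:R)) * (sin t *+ 2) = 0.
  rewrite mulr_suml -[RHS]oppr0 -[in RHS]key -sumrN; apply: eq_bigr => m _; rewrite e opprK //.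
by move/eqP; rewrite mulf_eq0 (negbTE st0) orbF => /eqP.
Qed.

Lemma sum_cos (p : nat) :
  \sum_(m < n) cos (w * (m * p)%N%:R) = (n %| p)%:R * n%:R.
Proof.
rewrite (sums_mod p).1 /dvdn.
have := ltn_pmod p hn.
case: (p %% n)%N => [|r] rn /=.
  rewrite mul1r (eq_bigr (fun _ => 1)); last by move=> m _; rewrite muln0 mulr0 cos0.
  by rewrite sumr_const card_ord.
by rewrite (sums_small (r:=r.+1) rn).1 mul0r.
Qed.

Lemma sum_sin (p : nat) :
  \sum_(m < n) sin (w * (m * p)%N%:R) = 0.
Proof.
rewrite (sums_mod p).2.
have := ltn_pmod p hn.
case: (p %% n)%N => [|r] rn /=.
  by rewrite big1 // => m _; rewrite muln0 mulr0 sin0.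
by rewrite (sums_small (r:=r.+1) rn).2.
Qed.
End Trig.

Section Ord.
Variable n : nat.
Hypothesis hn : (0 < n)%N.

Lemma subord_invol (j m : 'I_n) : subord j (subord j m) = m.
Proof.
apply: val_inj => /=.
set u := (j + n - m)%N.
have mn := ltn_ord m. have jn := ltn_ord j.
have rn := ltn_pmod u hn.
rewrite -[RHS](modn_small mn); apply/eqP; rewrite -(eqn_modDr u).
have dv := divn_eq u n.
move: dv rn; move: (u %/ n)%N => q; move: (u %% n)%N => r => dv rn.
have -> : (j + n - r + u = q * n + (j + n))%N by rewrite /u in dv *; nia.
have -> : (m + u = j + n)%N by rewrite /u; lia.
by rewrite modnMDl.
Qed.

Lemma subord_mulk (j m : 'I_n) (k : nat) :
  ((subord j m * k) %% n = (j * k + (n - 1) * (m * k)) %% n)%N.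
Proof.
rewrite /= modnMml; apply/eqP; rewrite -(eqn_modDr (m * k)).
have mn := ltn_ord m.
have -> : ((j + n - m) * k + m * k = k * n + j * k)%N by nia.
have -> : (j * k + (n - 1) * (m * k) + m * k = (m * k) * n + j * k)%N by nia.
by rewrite !modnMDl.
Qed.
End Ord.

Section Mat.
Variable R : realType.
Variable n : nat.
Hypothesis hn : (0 < n)%N.
Variable a : 'cV[R]_n.
Hypothesis ha : forall i j : 'I_n, (i + j)%N = n -> a i 0 = a j 0.

Let w : R := 2 * pi / n%:R.
Let s : R := (Num.sqrt (n%:R : R))^-1.
Let C := Hc R n.
Let S := Hs R n.
Let Jm : 'M[R]_n := \matrix_(j, k) ((n %| j + k)%N%:R).

Lemma HcE (j k : 'I_n) : C j k = s * cos (w * (j * k)%N%:R).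
Proof. rewrite /C /Hc mxE natrM /w; congr (_ * cos _); ring. Qed.
Lemma HsE (j k : 'I_n) : S j k = s * sin (w * (j * k)%N%:R).
Proof. rewrite /S /Hs mxE natrM /w; congr (_ * sin _); ring. Qed.

Lemma sqrtn0 : Num.sqrt (n%:R : R) != 0.
Proof. by rewrite sqrtr_eq0 -ltNge ltr0n. Qed.

Lemma s2 : s ^+ 2 * n%:R = 1.
Proof.
rewrite /s exprVn sqr_sqrtr ?ler0n // mulVf //; exact: nR0.
Qed.

Lemma CC_SS : C *m C - S *m S = Jm.
Proof.
apply/matrixP => j k; rewrite !mxE -sumrB.
rewrite (eq_bigr (fun m : 'I_n => s ^+ 2 * cos (w * (m * (j + k))%N%:R))); last first.
  move=> m _; rewrite !HcE !HsE.
  have -> : w * (m * (j + k))%N%:R = w * (j * m)%N%:R + w * (m * k)%N%:R.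
    by rewrite !natrM natrD; ring.
  rewrite cosD; ring.
rewrite -mulr_sumr sum_cos // mulrA mulrC mulrA (mulrC _ (s ^+ 2)) s2 mul1r //.
Qed.

Lemma CS0 : C *m S = 0.
Proof.
apply/matrixP => j k; rewrite !mxE.
rewrite (eq_bigr (fun m : 'I_n => s ^+ 2 / 2 * (sin (w * (m * (j + k))%N%:R)
            + sin (w * (m * (k + (n - 1) * j))%N%:R)))); last first.
  move=> m _; rewrite !HcE !HsE.
  have -> : (m * (k + (n - 1) * j) = m * k + (n - 1) * (j * m))%N by ring.
  rewrite -sin_wB //.
  have -> : w * (m * (j + k))%N%:R = w * (j * m)%N%:R + w * (m * k)%N%:R.
    by rewrite !natrM natrD; ring.
  by rewrite sinD sinB; field.
by rewrite -big_distrr big_split /= !sum_sin // addr0 mulr0.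
Qed.

Lemma SC0 : S *m C = 0.
Proof.
apply/matrixP => j k; rewrite !mxE.
rewrite (eq_bigr (fun m : 'I_n => s ^+ 2 / 2 * (sin (w * (m * (j + k))%N%:R)
            + sin (w * (m * (j + (n - 1) * k))%N%:R)))); last first.
  move=> m _; rewrite !HcE !HsE.
  have -> : (m * (j + (n - 1) * k) = j * m + (n - 1) * (m * k))%N by ring.
  rewrite -sin_wB //.
  have -> : w * (m * (j + k))%N%:R = w * (j * m)%N%:R + w * (m * k)%N%:R.
    by rewrite !natrM natrD; ring.
  by rewrite sinD sinB; field.
by rewrite -big_distrr big_split /= !sum_sin // addr0 mulr0.
Qed.

Lemma cos_sub (j m : 'I_n) (k : nat) :
  cos (w * (subord j m * k)%N%:R) = cos (w * (j * k)%N%:R - w * (m * k)%N%:R).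
Proof. by rewrite cos_wB //; apply: cos_congr => //; rewrite subord_mulk. Qed.
Lemma sin_sub (j m : 'I_n) (k : nat) :
  sin (w * (subord j m * k)%N%:R) = sin (w * (j * k)%N%:R - w * (m * k)%N%:R).
Proof. by rewrite sin_wB //; apply: sin_congr => //; rewrite subord_mulk. Qed.

Lemma Tzero (k : nat) : \sum_(m < n) a m 0 * sin (w * (m * k)%N%:R) = 0.
Proof.
set z : 'I_n := Ordinal hn.
set T := (X in X = 0).
have : T = - T.
  rewrite {1}/T (reindex_inj (inv_inj (subord_invol hn z))) -sumrN.
  apply: eq_bigr => m _.
  rewrite sin_sub /= mul0n mulr0 sub0r sinN mulrN; congr (- (_ * _)).
  have [m0|mpos] := posnP m.
    by congr (a _ 0); apply: val_inj => /=; rewrite m0 subn0 modnn.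
  apply: ha => /=; rewrite add0n modn_small; first by rewrite subnK // ltnW.
  by rewrite ltn_subrL mpos.
move/eqP; rewrite -subr_eq0 opprK -mulr2n => /eqP; rewrite -mulr_natr.
by move/eqP; rewrite mulf_eq0 pnatr_eq0 orbF => /eqP.
Qed.

Definition lam (k : 'I_n) : R := \sum_(l < n) cos (w * (k * l)%N%:R) * a l 0.
Definition lamr : 'rV[R]_n := \row_k lam k.

Lemma LambdaE : Lambda a = diag_mx lamr.
Proof.
apply/matrixP => i k; rewrite !mxE.
case: (i == k) => /=; last by rewrite !mulr0n mulr0.
rewrite !mulr1n /lam mulr_sumr; apply: eq_bigr => l _.
rewrite -/C HcE /s !mulrA mulfV ?mul1r //; exact: sqrtn0.
Qed.

Lemma AC : Circ a *m C = C *m Lambda a.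
Proof.
rewrite LambdaE mul_mx_diag; apply/matrixP => j k; rewrite !mxE.
rewrite (reindex_inj (inv_inj (subord_invol hn j))) /=.
rewrite (eq_bigr (fun m : 'I_n => s * cos (w * (j * k)%N%:R) * (cos (w * (k * m)%N%:R) * a m 0)
   + s * sin (w * (j * k)%N%:R) * (a m 0 * sin (w * (m * k)%N%:R)))); last first.
  move=> m _; rewrite mxE subord_invol // HcE cos_sub cosB [(k * m)%N]mulnC; ring.
have E := HcE j k; rewrite /C /Hc mxE in E; rewrite E.
rewrite big_split /= -!big_distrr /= Tzero mulr0 addr0 /lam; ring.
Qed.

Lemma AS : Circ a *m S = S *m Lambda a.
Proof.
rewrite LambdaE mul_mx_diag; apply/matrixP => j k; rewrite !mxE.
rewrite (reindex_inj (inv_inj (subord_invol hn j))) /=.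
rewrite (eq_bigr (fun m : 'I_n => s * sin (w * (j * k)%N%:R) * (cos (w * (k * m)%N%:R) * a m 0)
   - s * cos (w * (j * k)%N%:R) * (a m 0 * sin (w * (m * k)%N%:R)))); last first.
  move=> m _; rewrite mxE subord_invol // HsE sin_sub sinB [(k * m)%N]mulnC; ring.
have E := HsE j k; rewrite /S /Hs mxE in E; rewrite E.
rewrite sumrB -!big_distrr /= Tzero mulr0 subr0 /lam; ring.
Qed.

Lemma DJ : Lambda a *m Jm = Jm *m Lambda a.
Proof.
rewrite LambdaE mul_mx_diag mul_diag_mx; apply/matrixP => j k; rewrite !mxE.
case: (boolP (n %| j + k)%N) => [/dvdnP [t ht]|_]; last by rewrite mulr0 mul0r.
rewrite mulr1 mul1r /lam; apply: eq_bigr => l _; congr (_ * _).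
have -> : w * (k * l)%N%:R = - (w * 0%N%:R - w * (k * l)%N%:R) by rewrite mulr0; ring.
rewrite cosN cos_wB //; apply: cos_congr => //.
apply/eqP; rewrite -(eqn_modDr (k * l)).
have -> : (j * l + k * l = (t * l) * n)%N by rewrite -mulnDl ht; ring.
have -> : (0 + (n - 1) * (k * l) + k * l = (k * l) * n)%N by nia.
by rewrite !modnMl.
Qed.
End Mat.
Lemma toCE (R : realType) m k (M : 'M[R]_(m, k)) : map_mx (@toC R) M = map_mx (real_complex R) M.
Proof. by apply/matrixP => i j; rewrite !mxE. Qed.

Lemma iCiC (R : realType) : iC R * iC R = -1.
Proof. apply/eqP; rewrite eq_complex /=; apply/andP; split; apply/eqP; ring. Qed.

Theorem mainTheorem5 (R : realType) (n : nat) (hn : (0 < n)%N)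
  (a : 'cV[R]_n)
  (ha : forall i j : 'I_n, (i + j)%N = n -> a i 0 = a j 0) :
  let A := Circ a in
  let F := Fmx R n in
  let L := map_mx (@toC R) (Lambda a) in
  map_mx (@toC R) (Hp R n *m A *m Hm R n) = map_mx (@toC R) (Hm R n *m A *m Hp R n) /\
  map_mx (@toC R) (Hm R n *m A *m Hp R n) = L *m (F *m F) /\
  L *m (F *m F) = (F *m F) *m L.
Proof.
move=> A F L.
set J : 'M[R]_n := \matrix_(j, k) (n %| j + k)%:R.
have CS := CS0 R hn. have SC := SC0 R hn. have CCSS : _ = J := CC_SS R hn.
have P1 : Hp R n *m A *m Hm R n = J *m Lambda a.
  rewrite /Hp /Hm -mulmxA mulmxBr (AC hn ha) (AS hn ha) -mulmxBl mulmxA.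
  by rewrite mulmxDl !mulmxBr CS SC subr0 add0r CCSS.
have P2 : Hm R n *m A *m Hp R n = J *m Lambda a.
  rewrite /Hp /Hm -mulmxA mulmxDr (AC hn ha) (AS hn ha) -mulmxDl mulmxA.
  by rewrite mulmxBl !mulmxDr CS SC addr0 add0r CCSS.
have FF : F *m F = map_mx (real_complex R) J.
  rewrite /F /Fmx !toCE mulmxDl !mulmxDr -!scalemxAl -!scalemxAr scalerA iCiC scaleN1r.
  rewrite -!map_mxM CS SC !map_mx0 !scaler0 addr0 add0r -map_mxB CCSS //.
rewrite /L !toCE P1 P2 FF -!map_mxM (DJ hn).
by split.
Qed.
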